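(* Let $n\ge1$ and, for each $i=1,\dots,n$, let $m_i\ge1$, let $SCR_{i1},\dots,SCR_{im_i}\ge0$ be real numbers and let $P_i=(\rho_{iy,iw})_{y,w=1}^{m_i}$ be a correlation matrix. Let $(\rho_{i,w})_{i,w=1}^n$ be a correlation matrix. Define $$SCR_i=\sqrt{\sum_{x=1}^{m_i}\sum_{y=1}^{m_i} SCR_{ix}SCR_{iy}\rho_{ix,iy}},\qquad BSCR=\sqrt{\sum_{i=1}^n\sum_{w=1}^n SCR_iSCR_w\rho_{i,w}},$$ so that $BSCR$ is a function of all $SCR_{iy}$, and assume $SCR_i>0$ for all $i$ and $BSCR>0$. Set $AR_i=\frac{\sum_{j=1}^n SCR_j\rho_{i,j}}{BSCR}$ and $AR_{iy}=\frac{\sum_{w=1}^{m_i} SCR_{iw}\rho_{iy,iw}}{SCR_i}$, and $SCR_{iy}^{Ai}=SCR_{iy}\cdot AR_{iy}$. Then the Euler allocation of $BSCR$ among all sub-risks, $SCR_{iy}^A:=SCR_{iy}\cdot\frac{\partial BSCR}{\partial SCR_{iy}}$, is uniquely determined and satisfies $$BSCR=\sum_{i=1}^n\sum_{y=1}^{m_i}SCR_{iy}^A=\sum_{i=1}^n\sum_{y=1}^{m_i}SCR_{iy}\cdot AR_{iy}\cdot AR_i=\sum_{i=1}^n\sum_{y=1}^{m_i}SCR_{iy}^{Ai}\cdot AR_i,$$ i.e. $SCR_{iy}^A=SCR_{iy}\cdot\frac{\sum_{w=1}^{m_i}SCR_{iw}\rho_{iy,iw}}{SCR_i}\cdot AR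_i$.
   Context: This is the two-level Solvency II Standard Formula aggregation: sub-risk capital requirements $SCR_{iy}$ are aggregated into risk-module requirements $SCR_i$, which are aggregated into the Basic Solvency Capital Requirement $BSCR$, with regulator-given correlation coefficients. A correlation matrix means a symmetric positive semidefinite real matrix with unit diagonal. The Euler allocation principle: for a function $f$ positively homogeneous of degree one, $f(x)=\sum_k x_k\,\partial f/\partial x_k$, and the $k$-th term is the amount allocated to component $k$. *)

(* Defs.v *)
From HB Require Import structures.
From mathcomp Require Import all_boot all_order all_algebra.
From mathcomp Require Import all_classical all_reals all_analysis.
Set Implicit Arguments. Unset Strict Implicit. Unset Printing Implicit Defensive.
Import Order.TTheory GRing.Theory Num.Theory.
Local Open Scope ring_scope.

Definition correlation_matrix (R : realType) (k : nat) (A : 'M[R]_k) : Prop :=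
  [/\ A^T = A,
      (forall v : 'rV[R]_k, 0 <= (v *m A *m v^T) 0 0)
    & forall i : 'I_k, A i i = 1].

Definition sf_aggr (R : realType) (k : nat) (A : 'M[R]_k) (v : 'I_k -> R) : R :=
  Num.sqrt (\sum_(x < k) \sum_(y < k) v x * v y * A x y).

Definition SCR_mod (R : realType) (n : nat) (m : 'I_n -> nat)
  (P : forall i : 'I_n, 'M[R]_(m i)) (scr : forall i : 'I_n, 'I_(m i) -> R)
  (i : 'I_n) : R := sf_aggr (P i) (scr i).

Definition BSCR (R : realType) (n : nat) (m : 'I_n -> nat)
  (P : forall i : 'I_n, 'M[R]_(m i)) (Q : 'M[R]_n)
  (scr : forall i : 'I_n, 'I_(m i) -> R) : R :=
  sf_aggr Q (SCR_mod P scr).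

Definition upd (n : nat) (m : 'I_n -> nat) (T : Type)
  (scr : forall i : 'I_n, 'I_(m i) -> T) (i : 'I_n) (y : 'I_(m i)) (t : T)
  : forall j : 'I_n, 'I_(m j) -> T :=
  fun j z => if Tagged (fun j => 'I_(m j)) z == Tagged (fun j => 'I_(m j)) y
             then t else scr j z.

Definition dBSCR (R : realType) (n : nat) (m : 'I_n -> nat)
  (P : forall i : 'I_n, 'M[R]_(m i)) (Q : 'M[R]_n)
  (scr : forall i : 'I_n, 'I_(m i) -> R) (i : 'I_n) (y : 'I_(m i)) : R :=
  derive1 (fun t : R => BSCR P Q (upd scr y t)) (scr i y).

(* Main.v *)
Require Import Defs.
From HB Require Import structures.
From mathcomp Require Import all_boot all_order all_algebra.
From mathcomp Require Import all_classical all_reals all_analysis.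
Import Order.TTheory GRing.Theory Num.Theory.
Local Open Scope ring_scope.


Section H.
Variable R : realType.

Lemma der_cst (x c : R) : is_derive x 1 (fun _ : R => c) 0.
Proof. exact: is_derive_cst. Qed.

Lemma der_sum N (h : 'I_N -> R -> R) (x : R) (dh : 'I_N -> R) :
  (forall k, is_derive x 1 (h k) (dh k)) ->
  is_derive x 1 (fun t => \sum_(k < N) h k t) (\sum_(k < N) dh k).
Proof. move=> H; rewrite -fct_sumE; exact: is_derive_sum. Qed.

Lemma der_mul (f g : R -> R) (x df dg : R) :
  is_derive x 1 f df -> is_derive x 1 g dg ->
  is_derive x 1 (fun t => f t * g t) (f x * dg + g x * df).
Proof. move=> H1 H2; have := is_deriveM H1 H2. by []. Qed.

Lemma der_sqrt (f : R -> R) (x df : R) : 0 < f x ->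
  is_derive x 1 f df ->
  is_derive x 1 (fun t => Num.sqrt (f t)) ((2 * Num.sqrt (f x))^-1 * df).
Proof.
move=> fx H; have := @is_derive1_comp R Num.sqrt f x _ _ (is_derive1_sqrt fx) H.
by [].
Qed.

Lemma der_quad k (A : 'M[R]_k) (w : R -> 'I_k -> R) (dw : 'I_k -> R) (x : R) :
  A^T = A -> (forall z, is_derive x 1 (fun t => w t z) (dw z)) ->
  is_derive x 1 (fun t => \sum_(a < k) \sum_(b < k) w t a * w t b * A a b)
    (2 * \sum_(a < k) \sum_(b < k) w x a * dw b * A a b).
Proof.
move=> AT H.
have D : is_derive x 1 (fun t => \sum_(a < k) \sum_(b < k) w t a * w t b * A a b)
   (\sum_(a < k) \sum_(b < k) ((w x a * w x b) * 0 + A a b * (w x a * dw b + w x b * dw a))).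
  apply: der_sum => a; apply: der_sum => b.
  apply: (@der_mul (fun t => w t a * w t b) (fun _ => A a b) x (w x a * dw b + w x b * dw a) 0 _ (der_cst _ _)).
  exact: (@der_mul (fun t => w t a) (fun t => w t b) x _ _ (H a) (H b)).
apply: (is_derive_eq D).
rewrite mulr2n mulrDl mul1r.
have E : forall a b, (w x a * w x b) * 0 + A a b * (w x a * dw b + w x b * dw a)
   = w x a * dw b * A a b + w x b * dw a * A b a.
  move=> a b; have -> : A b a = A a b by rewrite -[in LHS]AT mxE.
  by rewrite mulr0 add0r mulrDr mulrC [_ * (w x b * _)]mulrC.
rewrite (eq_bigr _ (fun a _ => eq_bigr _ (fun b _ => E a b))).
rewrite (eq_bigr _ (fun a _ => big_split _ _ _ _ _)) big_split /=.
by rewrite [X in _ + X]exchange_big.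
Qed.

Lemma der_aggr k (A : 'M[R]_k) (w : R -> 'I_k -> R) (dw : 'I_k -> R) (x : R) :
  A^T = A -> (forall z, is_derive x 1 (fun t => w t z) (dw z)) ->
  0 < sf_aggr A (w x) ->
  is_derive x 1 (fun t => sf_aggr A (w t))
    ((\sum_(a < k) \sum_(b < k) w x a * dw b * A a b) / sf_aggr A (w x)).
Proof.
move=> AT H pos.
have pos' : 0 < \sum_(a < k) \sum_(b < k) w x a * w x b * A a b.
  by move: pos; rewrite /sf_aggr sqrtr_gt0.
have D := @der_sqrt _ x _ pos' (@der_quad k A w dw x AT H); rewrite /sf_aggr; apply: (is_derive_eq D).
by rewrite invfM mulrACA mulVf ?pnatr_eq0 // mul1r mulrC.
Qed.
End H.

Lemma sq_aggr (R : realType) k (A : 'M[R]_k) (v : 'I_k -> R) :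
  0 < sf_aggr A v -> \sum_(a < k) \sum_(b < k) v a * v b * A a b = sf_aggr A v ^+ 2.
Proof.
move=> h; have h' := h; rewrite /sf_aggr sqrtr_gt0 in h'.
by rewrite /sf_aggr sqr_sqrtr // ltW.
Qed.

Lemma symm (R : realType) k (A : 'M[R]_k) a b : A^T = A -> A a b = A b a.
Proof. by move=> AT; rewrite -[in LHS]AT mxE. Qed.

Lemma pick_sum (R : realType) k (y : 'I_k) (F : 'I_k -> R) :
  \sum_(b < k) F b * (b == y)%:R = F y.
Proof.
rewrite (bigD1 y) //= eqxx mulr1 big1 ?addr0 // => b /negbTE ->.
by rewrite mulr0.
Qed.

Section Main.
Variables (R : realType) (n : nat) (m : 'I_n -> nat)
  (scr : forall i : 'I_n, 'I_(m i) -> R).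

Lemma upd_same (i : 'I_n) (y : 'I_(m i)) j (z : 'I_(m j)) : upd scr y (scr i y) z = scr j z.
Proof.
rewrite /upd; case: eqP => [E|//].
by have := congr1 (fun p : {j : 'I_n & 'I_(m j)} => scr (tag p) (tagged p)) E.
Qed.

Lemma upd_ne (i : 'I_n) (y : 'I_(m i)) j t (z : 'I_(m j)) : j != i -> upd scr y t z = scr j z.
Proof.
move=> ne; rewrite /upd; case: eqP => [E|//].
by have := congr1 tag E => /= E'; rewrite E' eqxx in ne.
Qed.

Lemma upd_eq (i : 'I_n) (y : 'I_(m i)) t z :
  upd scr y t z = if z == y then t else scr i z.
Proof. by rewrite /upd eq_Tagged. Qed.
End Main.

Section Deriv.
Variables (R : realType) (n : nat) (m : 'I_n -> nat)
  (scr : forall i : 'I_n, 'I_(m i) -> R)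
  (P : forall i : 'I_n, 'M[R]_(m i)) (Q : 'M[R]_n).
Hypothesis PT : forall i, (P i)^T = P i.
Hypothesis QT : Q^T = Q.
Hypothesis Spos : forall i, 0 < SCR_mod P scr i.
Hypothesis Bpos : 0 < BSCR P Q scr.

Lemma mod_same (i : 'I_n) (y : 'I_(m i)) :
  SCR_mod P (upd scr y (scr i y)) = SCR_mod P scr.
Proof.
apply/funext => j; rewrite /SCR_mod /sf_aggr; congr Num.sqrt.
by apply: eq_bigr => a _; apply: eq_bigr => b _; rewrite !upd_same.
Qed.

Lemma der_mod (i : 'I_n) (y : 'I_(m i)) j :
  is_derive (scr i y) 1 (fun t => SCR_mod P (upd scr y t) j)
    (if j == i then (\sum_(w < m i) scr i w * P i y w) / SCR_mod P scr i else 0).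
Proof.
case: (eqVneq j i) => [->|ne].
  rewrite /SCR_mod.
  have H : forall z, is_derive (scr i y) 1 (fun t => upd scr y t z) ((z == y)%:R).
    move=> z; case: (eqVneq z y) => [->|nzy].
      under eq_fun do rewrite upd_eq eqxx. exact: is_derive_id.
    under eq_fun do rewrite upd_eq (negbTE nzy). exact: der_cst.
  have pos : 0 < sf_aggr (P i) (upd scr y (scr i y) (j:=i)).
    by have := Spos i; rewrite -(mod_same i y).
  apply: (is_derive_eq (@der_aggr R (m i) (P i) (fun t => upd scr y t (j:=i)) (fun z => (z == y)%:R) (scr i y) (PT i) H pos)).
  have -> : sf_aggr (P i) (upd scr y (scr i y) (j:=i)) = SCR_mod P scr i.
    by rewrite -(mod_same i y).
  congr (_ / _); apply: eq_bigr => a _; under eq_bigr do rewrite mulrAC.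
  rewrite (@pick_sum R (m i) y (fun b => upd scr y (scr i y) a * P i a b)) upd_same.
  by rewrite (@symm R (m i) (P i) a y (PT i)).
under eq_fun => t do (have -> : SCR_mod P (upd scr y t) j = SCR_mod P scr j
  by rewrite /SCR_mod /sf_aggr; congr Num.sqrt;
     apply: eq_bigr => a _; apply: eq_bigr => b _; rewrite !upd_ne).
exact: der_cst.
Qed.

Lemma der_B (i : 'I_n) (y : 'I_(m i)) :
  is_derive (scr i y) 1 (fun t => BSCR P Q (upd scr y t))
    ((\sum_(w < m i) scr i w * P i y w) / SCR_mod P scr i *
     ((\sum_(j < n) SCR_mod P scr j * Q i j) / BSCR P Q scr)).
Proof.
set c := (\sum_(w < m i) scr i w * P i y w) / SCR_mod P scr i.
rewrite /BSCR.
have pos : 0 < sf_aggr Q (SCR_mod P (upd scr y (scr i y))) by rewrite mod_same.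
apply: (is_derive_eq (@der_aggr R n Q (fun t => SCR_mod P (upd scr y t))
   (fun j => if j == i then c else 0) (scr i y) QT (der_mod i y) pos)).
rewrite mod_same mulrA; congr (_ / _).
rewrite mulr_sumr; apply: eq_bigr => a _.
have E : forall b, SCR_mod P scr a * (if b == i then c else 0) * Q a b
   = (SCR_mod P scr a * c * Q a b) * (b == i)%:R.
  by move=> b; case: eqP; rewrite ?mulr1 ?mulr0 ?mul0r.
under eq_bigr do rewrite E.
rewrite (@pick_sum R n i (fun b => SCR_mod P scr a * c * Q a b)).
by rewrite (@symm R n Q a i QT) mulrAC [LHS]mulrC.
Qed.
End Deriv.

Theorem theorem3 (R : realType) (n : nat) (m : 'I_n -> nat)
  (scr : forall i : 'I_n, 'I_(m i) -> R)
  (P : forall i : 'I_n, 'M[R]_(m i)) (Q : 'M[R]_n) :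
  (0 < n)%N ->
  (forall i, 0 < m i)%N ->
  (forall i y, 0 <= scr i y) ->
  (forall i, correlation_matrix (P i)) ->
  correlation_matrix Q ->
  (forall i, 0 < SCR_mod P scr i) ->
  0 < BSCR P Q scr ->
  let SCRi := SCR_mod P scr in
  let B := BSCR P Q scr in
  let AR := fun i : 'I_n => (\sum_(j < n) SCRi j * Q i j) / B in
  let ARs := fun (i : 'I_n) (y : 'I_(m i)) =>
               (\sum_(w < m i) scr i w * P i y w) / SCRi i in
  let SCRAi := fun (i : 'I_n) (y : 'I_(m i)) => scr i y * ARs i y in
  let SCRA := fun (i : 'I_n) (y : 'I_(m i)) => scr i y * dBSCR P Q scr y in
  (forall i (y : 'I_(m i)),
     derivable (fun t : R => BSCR P Q (upd scr y t)) (scr i y) 1) /\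
  B = \sum_(i < n) \sum_(y < m i) SCRA i y /\
  B = \sum_(i < n) \sum_(y < m i) scr i y * ARs i y * AR i /\
  B = \sum_(i < n) \sum_(y < m i) SCRAi i y * AR i /\
  (forall i (y : 'I_(m i)), SCRA i y = scr i y * ARs i y * AR i).
Proof.
move=> n0 m0 nonneg HP HQ Spos Bpos SCRi B AR ARs SCRAi SCRA.
have PT : forall i, (P i)^T = P i by move=> i; case: (HP i).
have QT : Q^T = Q by case: HQ.
have D := fun i y => @der_B R n m scr P Q PT QT Spos Bpos i y.
have dB : forall i (y : 'I_(m i)), dBSCR P Q scr y = ARs i y * AR i.
  move=> i y; rewrite /dBSCR derive1E; exact: (@derive_val _ _ _ _ _ _ _ (D i y)).
have E5 : forall i (y : 'I_(m i)), SCRA i y = scr i y * ARs i y * AR i.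
  by move=> i y; rewrite /SCRA dB mulrA.
have inner : forall i, \sum_(y < m i) scr i y * ARs i y = SCRi i.
  move=> i; rewrite /ARs.
  under eq_bigr do rewrite mulrA.
  rewrite -mulr_suml.
  under eq_bigr do rewrite mulr_sumr.
  under eq_bigr do under eq_bigr do rewrite mulrA.
  rewrite (@sq_aggr R (m i) (P i) (scr i) (Spos i)).
  rewrite /SCRi /SCR_mod expr2 mulfK // gt_eqF //; exact: Spos i.
have K : B = \sum_(i < n) \sum_(y < m i) scr i y * ARs i y * AR i.
  under eq_bigr do rewrite -mulr_suml inner.
  rewrite /AR.
  under eq_bigr do rewrite mulrA.
  rewrite -mulr_suml.
  under eq_bigr do rewrite mulr_sumr.
  under eq_bigr do under eq_bigr do rewrite mulrA.
  rewrite (@sq_aggr R n Q SCRi Bpos).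
  rewrite /B /BSCR expr2 mulfK // gt_eqF //; exact: Bpos.
split.
  move=> i y; exact: (@ex_derive _ _ _ _ _ _ _ (D i y)).
split.
  by rewrite K; apply: eq_bigr => i _; apply: eq_bigr => y _; rewrite E5.
split; first exact: K.
by split.
Qed.
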